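(* Let $d>0$, let $\ell$ be a certified lower bound for $A^\top x\le u$ with certificate matrix $\Lambda$, and suppose $f(d,\ell)=1$. Let $i\in\arg\max_{h\in\{1,\dots,m\}}(a_h^\top y(d,\ell)-u_h)$, and define $\hat\lambda_i:=\gamma_i(d,\ell)Dt(d,\ell)-DA^\top B(d)^{-1}a_i$ and $\tilde\lambda_i:=\Lambda\hat\lambda_i^-+\hat\lambda_i^+$. If $\gamma_i(d,\ell)<\tau(A,u)$, then $\bar\lambda_i:=\tilde\lambda_i+e_i$ satisfies $A\bar\lambda_i=0$, $\bar\lambda_i\ge0$, $u^\top\bar\lambda_i<0$.
   Context: Standing assumption: $A=[a_1|\cdots|a_m]\in\mathbb{R}^{n\times m}$ has columns of unit Euclidean norm and $\{A\lambda:\lambda\ge0\}=\mathbb{R}^n$; $u\in\mathbb{R}^m$. $D=\mathrm{diag}(d)$; $r(\ell)=\tfrac12(u+\ell)$, $v(\ell)=\tfrac12(u-\ell)$, $B(d)=ADA^\top$, $y(d,\ell)=B(d)^{-1}ADr(\ell)$, $t(d,\ell)=A^\top y(d,\ell)-r(\ell)$, $f(d,\ell)=v(\ell)^\top Dv(\ell)-t(d,\ell)^\top Dt(d,\ell)$, $\gamma_i(d,\ell)=\sqrt{f(d,\ell)a_i^\top B(d)^{-1}a_i}$ when $f(d,\ell)>0$. $\ell$ is a certified lower bound with certificate matrix $\Lambda$ if $A\Lambda=-A$, $\Lambda\ge0$, $-\Lambda^\top u\ge\ell$. $\tau(A,u):=|z^*|$ with $z^*:=\max_{x}\min_{i}(u_i-a_i^\top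 x)$. $w^\pm$ are positive/negative parts. *)

(* Defs.v *)
From HB Require Import structures.
From mathcomp Require Import all_boot all_order all_algebra.
Set Implicit Arguments. Unset Strict Implicit. Unset Printing Implicit Defensive.
Import Order.TTheory GRing.Theory Num.Theory.
Local Open Scope ring_scope.

Section Defs.
Variables (R : rcfType) (n m : nat).
Implicit Types (A : 'M[R]_(n, m)) (u d l : 'cV[R]_m).

Definition acol A (i : 'I_m) : 'cV[R]_n := col i A.

Definition unit_columns A := forall i : 'I_m, \sum_(k < n) (A k i) ^+ 2 = 1.
Definition positively_spanning A :=
  forall x : 'cV[R]_n, exists lam : 'cV[R]_m,
    (forall i, 0 <= lam i 0) /\ A *m lam = x.

Definition Dmat d : 'M[R]_m := diag_mx d^T.
Definition rvec u l : 'cV[R]_m := 2^-1 *: (u + l).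
Definition vvec u l : 'cV[R]_m := 2^-1 *: (u - l).
Definition Bmat A d : 'M[R]_n := A *m Dmat d *m A^T.
Definition yvec A u d l : 'cV[R]_n := invmx (Bmat A d) *m A *m Dmat d *m rvec u l.
Definition tvec A u d l : 'cV[R]_m := A^T *m yvec A u d l - rvec u l.
Definition fval A u d l : R :=
  ((vvec u l)^T *m Dmat d *m vvec u l) 0 0
  - ((tvec A u d l)^T *m Dmat d *m tvec A u d l) 0 0.
(* gamma_i; only meaningful when fval > 0 *)
Definition gammai A u d l (i : 'I_m) : R :=
  Num.sqrt (fval A u d l * ((acol A i)^T *m invmx (Bmat A d) *m acol A i) 0 0).

Definition certified_lb A u l (Lam : 'M[R]_m) :=
  [/\ A *m Lam = - A, forall i j, 0 <= Lam i j &
      forall i, l i 0 <= (- (Lam^T *m u)) i 0].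

Definition pospart (w : 'cV[R]_m) : 'cV[R]_m := \col_i Num.max (w i 0) 0.
Definition negpart (w : 'cV[R]_m) : 'cV[R]_m := \col_i Num.max (- w i 0) 0.

Definition is_min_slack A u (x : 'cV[R]_n) (z : R) :=
  (exists i, z = u i 0 - (A^T *m x) i 0) /\
  (forall i, z <= u i 0 - (A^T *m x) i 0).
Definition is_zstar A u (z : R) :=
  (exists x, is_min_slack A u x z) /\
  (forall x w, is_min_slack A u x w -> w <= z).

End Defs.

(* Main.v *)
Require Import Defs.
From HB Require Import structures.
From mathcomp Require Import all_boot all_order all_algebra.
From mathcomp Require Import ring lra.
Set Implicit Arguments. Unset Strict Implicit.
Import Order.TTheory GRing.Theory Num.Theory.
Local Open Scope ring_scope.

Section H.
Variable R : rcfType.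

Definition dot {k} (p q : 'cV[R]_k) : R := (p^T *m q) 0 0.

Lemma dotE k (p q : 'cV[R]_k) : dot p q = \sum_j p j 0 * q j 0.
Proof. by rewrite /dot !mxE; apply: eq_bigr => j _; rewrite mxE. Qed.

Lemma dotC k (p q : 'cV[R]_k) : dot p q = dot q p.
Proof. by rewrite !dotE; apply: eq_bigr => j _; rewrite mulrC. Qed.

Lemma dot_mul k l (M : 'M[R]_(k, l)) p q : dot (M *m p) q = dot p (M^T *m q).
Proof. by rewrite /dot trmx_mul mulmxA. Qed.

Lemma dotDr k (p q s : 'cV[R]_k) : dot p (q + s) = dot p q + dot p s.
Proof. by rewrite !dotE -big_split /=; apply: eq_bigr => j _; rewrite mxE mulrDr. Qed.
Lemma dotBr k (p q s : 'cV[R]_k) : dot p (q - s) = dot p q - dot p s.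
Proof. by rewrite !dotE -sumrB /=; apply: eq_bigr => j _; rewrite !mxE mulrBr. Qed.
Lemma dotZr k (p q : 'cV[R]_k) a : dot p (a *: q) = a * dot p q.
Proof. by rewrite !dotE mulr_sumr; apply: eq_bigr => j _; rewrite mxE mulrCA. Qed.
Lemma dot0r k (p : 'cV[R]_k) : dot p 0 = 0.
Proof. by rewrite dotE big1 // => j _; rewrite mxE mulr0. Qed.

Lemma Dmat_mulE m (d : 'cV[R]_m) (p : 'cV[R]_m) j : (Dmat d *m p) j 0 = d j 0 * p j 0.
Proof. by rewrite /Dmat mul_diag_mx !mxE. Qed.

Lemma Dmat_tr m (d : 'cV[R]_m) : (Dmat d)^T = Dmat d.
Proof. by rewrite /Dmat tr_diag_mx. Qed.

Lemma dot_delta m (p : 'cV[R]_m) i : dot p (delta_mx i 0) = p i 0.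
Proof. by rewrite /dot -colE !mxE. Qed.

Lemma psum_sq_eq0 m (a c : 'cV[R]_m) : (forall j, 0 < a j 0) ->
  \sum_j a j 0 * (c j 0 * c j 0) = 0 -> c = 0.
Proof.
move=> ha hs; apply/matrixP => j k; rewrite (ord1 k) mxE.
have h0 : forall j, true -> 0 <= a j 0 * (c j 0 * c j 0).
  by move=> jj _; apply: mulr_ge0; [exact: ltW | rewrite -expr2 sqr_ge0].
have /eqP := @psumr_eq0P _ _ _ _ h0 hs j isT.
by rewrite mulf_eq0 (gt_eqF (ha j)) /= mulf_eq0 orbb => /eqP.
Qed.

Lemma dotDmat m (d p q : 'cV[R]_m) : dot p (Dmat d *m q) = \sum_j d j 0 * (p j 0 * q j 0).
Proof. by rewrite dotE; apply: eq_bigr => j _; rewrite Dmat_mulE mulrCA. Qed.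

Lemma Bmat_tr n m (A : 'M[R]_(n,m)) (d : 'cV[R]_m) : (Bmat A d)^T = Bmat A d.
Proof. by rewrite /Bmat !trmx_mul trmxK Dmat_tr mulmxA. Qed.

Lemma Bmat_unit n m (A : 'M[R]_(n,m)) (d : 'cV[R]_m) : positively_spanning A ->
  (forall j, 0 < d j 0) -> Bmat A d \in unitmx.
Proof.
move=> hps hd; rewrite -row_free_unit -kermx_eq0; apply/rowV0P => v /sub_kermxP Hv.
set w := v^T.
have Bw : Bmat A d *m w = 0 by rewrite /w -(Bmat_tr A d) -trmx_mul Hv trmx0.
have c0 : A^T *m w = 0.
  apply: (psum_sq_eq0 hd); rewrite -dotDmat dot_mul trmxK !mulmxA -/(Bmat A d) Bw dot0r //=.
have [lam [_ hl]] := hps w.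
have w0 : dot w w = 0 by rewrite -{1}hl dot_mul c0 dot0r.
have : v^T = 0.
  apply: (@psum_sq_eq0 _ (const_mx 1)); first by move=> j; rewrite mxE ltr01.
  rewrite -[RHS]w0 dotE; apply: eq_bigr => j _; by rewrite mxE mul1r.
by move/(congr1 trmx); rewrite trmxK trmx0.
Qed.

Lemma dotDl k (p q s : 'cV[R]_k) : dot (p + q) s = dot p s + dot q s.
Proof. by rewrite dotC dotDr !(dotC s). Qed.
Lemma dotBl k (p q s : 'cV[R]_k) : dot (p - q) s = dot p s - dot q s.
Proof. by rewrite dotC dotBr !(dotC s). Qed.
Lemma dotD_sym m (d p q : 'cV[R]_m) : dot p (Dmat d *m q) = dot q (Dmat d *m p).
Proof. by rewrite !dotDmat; apply: eq_bigr => j _; rewrite (mulrC (p j 0)). Qed.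
Lemma dot_ge0 m (d p : 'cV[R]_m) : (forall j, 0 <= d j 0) -> 0 <= dot p (Dmat d *m p).
Proof. by move=> hd; rewrite dotDmat; apply: sumr_ge0 => j _; apply: mulr_ge0 => //; rewrite -expr2 sqr_ge0. Qed.

Lemma maxpn (x : R) : Num.max x 0 - Num.max (-x) 0 = x.
Proof. rewrite /Order.max; case: ltrP => h1; case: ltrP => h2; lra. Qed.
Lemma maxge0 (x : R) : 0 <= Num.max x 0.
Proof. rewrite /Order.max; case: ltrP => h1 //. Qed.

Lemma pw_main (K h l u : R) : 0 < K ->
  - l * Num.max (- h) 0 + u * Num.max h 0 <=
  2^-1 * (u + l) * h + 2^-1 * (K * (2^-1 * (u - l)) ^+ 2 + h ^+ 2 / K).
Proof.
move=> hK; have K0 : K != 0 by rewrite gt_eqF.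
have q1 : 0 <= (K * (2^-1 * (u - l)) - h) ^+ 2 / (2 * K).
  by apply: divr_ge0; [rewrite sqr_ge0 | rewrite mulr_ge0 // ltW].
have q2 : 0 <= (K * (2^-1 * (u - l)) + h) ^+ 2 / (2 * K).
  by apply: divr_ge0; [rewrite sqr_ge0 | rewrite mulr_ge0 // ltW].
have e1 : (K * (2^-1 * (u - l)) - h) ^+ 2 / (2 * K) =
   2^-1 * (K * (2^-1 * (u - l)) ^+ 2 + h ^+ 2 / K) - 2^-1 * (u - l) * h by field.
have e2 : (K * (2^-1 * (u - l)) + h) ^+ 2 / (2 * K) =
   2^-1 * (K * (2^-1 * (u - l)) ^+ 2 + h ^+ 2 / K) + 2^-1 * (u - l) * h by field.
rewrite e1 in q1; rewrite e2 in q2; move: q1 q2.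
generalize (K * (2^-1 * (u - l)) ^+ 2 + h ^+ 2 / K) => X q1 q2.
rewrite /Order.max; case: ltrP => h1; case: ltrP => h2; idtac. all: try nra.
have h0 : h = 0 by lra.
rewrite h0 in q1 q2 *; rewrite !(mulr0, oppr0, addr0, subr0) in q1 q2 *; lra.
Qed.

Lemma dotNr k (p q : 'cV[R]_k) : dot p (- q) = - dot p q.
Proof. by rewrite !dotE -sumrN; apply: eq_bigr => j _; rewrite mxE mulrN. Qed.
Lemma dotNl k (p q : 'cV[R]_k) : dot (- p) q = - dot p q.
Proof. by rewrite dotC dotNr dotC. Qed.

Lemma dot_self_ge0 k (p : 'cV[R]_k) : 0 <= dot p p.
Proof. by rewrite dotE; apply: sumr_ge0 => j _; rewrite -expr2 sqr_ge0. Qed.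

Lemma gram_bound n m (A : 'M[R]_(n, m)) : unit_columns A ->
  forall j k, `|(A^T *m col j A) k 0| <= 1.
Proof.
move=> hu j k.
have e : forall p, dot (col p A) (col p A) = 1.
  move=> p; rewrite dotE -(hu p); apply: eq_bigr => q _; by rewrite !mxE expr2.
have -> : (A^T *m col j A) k 0 = dot (col k A) (col j A).
  by rewrite dotE mxE; apply: eq_bigr => q _; rewrite !mxE.
have h1 := dot_self_ge0 (col k A + col j A).
have h2 := dot_self_ge0 (col k A - col j A).
rewrite !(dotDl, dotDr, dotNl, dotNr) !e opprK (dotC (col j A)) in h1 h2.
rewrite ler_norml; apply/andP; split; lra.
Qed.
End H.

Unset Implicit Arguments.
Unset Strict Implicit.
Theorem proposition4 (R : rcfType) (n m : nat) (A : 'M[R]_(n, m))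
  (u d l : 'cV[R]_m) (Lam : 'M[R]_m) (zstar : R) (i : 'I_m) :
  unit_columns A -> positively_spanning A ->
  (forall j, 0 < d j 0) ->
  certified_lb A u l Lam ->
  fval A u d l = 1 ->
  (forall h : 'I_m, (A^T *m yvec A u d l) h 0 - u h 0 <=
                    (A^T *m yvec A u d l) i 0 - u i 0) ->
  is_zstar A u zstar ->
  let lhat := gammai A u d l i *: (Dmat d *m tvec A u d l)
              - Dmat d *m A^T *m invmx (Bmat A d) *m acol A i in
  let ltil := Lam *m negpart lhat + pospart lhat in
  let lbar := ltil + delta_mx i 0 in
  gammai A u d l i < `|zstar| ->
  [/\ A *m lbar = 0, forall j, 0 <= lbar j 0 & (u^T *m lbar) 0 0 < 0].
Proof.
move=> huc hps hd [hAL hL hl] hf hmax hz lhat ltil lbar hg.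
have Bu := Bmat_unit hps hd.
set D := Dmat d in lhat ltil lbar hf Bu hg *.
set g := gammai A u d l i in lhat ltil lbar hg *.
set y := yvec A u d l in hmax *.
set t := tvec A u d l in lhat ltil lbar hf *.
set r := rvec u l.
set v := vvec u l.
set B := Bmat A d in lhat ltil lbar hf Bu hg *.
set Bi := invmx B in lhat ltil lbar hf hg *.
set ai := acol A i in lhat ltil lbar hg *.
have ef : dot v (Dmat d *m v) - dot t (Dmat d *m t) = 1.
  by rewrite -hf /fval /dot !mulmxA.
have eg : g = Num.sqrt (dot ai (Bi *m ai)).
  by rewrite /g /gammai hf mul1r /dot mulmxA.
have ey : y = Bi *m (A *m Dmat d *m r) by rewrite /y /yvec !mulmxA.
have et : t = A^T *m y - r by [].
have Bdef : A *m Dmat d *m A^T = B by [].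
have er : r = 2^-1 *: (u + l) by [].
have ev : v = 2^-1 *: (u - l) by [].
have elhat : lhat = g *: (Dmat d *m t) - Dmat d *m A^T *m Bi *m ai by [].
have eltil : ltil = Lam *m negpart lhat + pospart lhat by [].
have elbar : lbar = ltil + delta_mx i 0 by [].
have eai : ai = col i A by [].
have eBi : Bi = invmx B by [].
have eD : D = Dmat d by [].
clearbody lbar ltil lhat ai Bi B v r t y g D.
subst D.
set w := Bi *m ai.
set c := A^T *m w.
have ew : w = Bi *m ai by [].
have ec : c = A^T *m w by [].
clearbody c w.
have hy : B *m y = A *m Dmat d *m r by rewrite ey eBi mulKVmx.
have ADt : A *m (Dmat d *m t) = 0.
  by rewrite et mulmxBr mulmxBr !mulmxA Bdef hy subrr.
have hw : B *m w = ai by rewrite ew eBi mulKVmx.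
have hc : Dmat d *m A^T *m Bi *m ai = Dmat d *m c by rewrite ec ew !mulmxA.
have Ah : A *m lhat = - ai.
  rewrite elhat hc mulmxBr -scalemxAr ADt scaler0 sub0r.
  by rewrite ec !mulmxA Bdef hw.
have pq : pospart lhat - negpart lhat = lhat.
  by apply/matrixP => j k; rewrite (ord1 k) !mxE maxpn.
have Altil : A *m ltil = - ai.
  by rewrite eltil mulmxDr mulmxA hAL mulNmx addrC -mulmxN -mulmxDr pq Ah.
have Albar : A *m lbar = 0.
  by rewrite elbar mulmxDr Altil -colE -eai addNr.
have lbar_ge0 : forall j, 0 <= lbar j 0.
  move=> j; rewrite elbar eltil !mxE; apply: addr_ge0; last by [].
  apply: addr_ge0; last exact: maxge0.
  by apply: sumr_ge0 => k _; rewrite mxE; apply: mulr_ge0 => //; exact: maxge0.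
split => //.
change (dot u lbar < 0).
have eaa : dot ai ai = 1.
  by rewrite eai dotE -(huc i); apply: eq_bigr => k _; rewrite !mxE expr2.
have eBw : B *m w = A *m (Dmat d *m c) by rewrite -Bdef ec !mulmxA.
have hbeta : dot ai w = dot c (Dmat d *m c).
  by rewrite -{1}hw eBw dot_mul -ec dotC.
have hone : dot (A^T *m ai) (Dmat d *m c) = 1.
  by have := eaa; rewrite -{2}hw eBw dotC dot_mul dotC.
have hb0 : 0 < dot ai w.
  rewrite lt_def; apply/andP; split; last by rewrite hbeta dot_ge0 // => j; exact: ltW.
  apply/eqP => hb.
  have c0 : c = 0 by apply: (psum_sq_eq0 hd); rewrite -dotDmat -hbeta.
  move: hone; rewrite c0 mulmx0 dot0r => /esym/eqP; rewrite oner_eq0.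
  done.
set beta := dot ai w in hbeta hb0.
have hg2 : g ^+ 2 = beta by rewrite eg -ew sqr_sqrtr // ltW.
have hgpos : 0 < g by rewrite eg -ew sqrtr_gt0.
have BT : B^T = B by rewrite -Bdef !trmx_mul trmxK Dmat_tr mulmxA.
set aty := (A^T *m y) i 0.
have eaty : dot ai y = aty.
  by rewrite eai dotE /aty mxE; apply: eq_bigr => k _; rewrite !mxE.
have dtc : dot t (Dmat d *m c) = 0.
  by rewrite dotD_sym ec dot_mul trmxK ADt dot0r.
have drt : dot r (Dmat d *m t) = - dot t (Dmat d *m t).
  have -> : r = A^T *m y - t by rewrite et opprB addrC subrK.
  by rewrite dotBl dot_mul trmxK ADt dot0r sub0r.
have drc : dot r (Dmat d *m c) = aty.
  rewrite dotD_sym ec dot_mul trmxK mulmxA -hy dotC dot_mul BT hw dotC.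
  exact: eaty.
have drh : dot r lhat = - g * dot t (Dmat d *m t) - aty.
  by rewrite elhat hc dotBr dotZr drt drc mulrN mulNr.
case: (ltrP zstar 0) => hzs.
  have hslack : u i 0 - aty <= zstar.
    apply: (proj2 hz y (u i 0 - aty)); split; first by exists i.
    by move=> h; have := hmax h; rewrite -/aty; lra.
  rewrite ltr0_norm // in hg.
  have ub : dot u lbar = dot (Lam^T *m u) (negpart lhat) + dot u (pospart lhat) + u i 0.
    by rewrite elbar eltil !dotDr dot_delta dotC dot_mul dotC.
  have sb1 : dot (Lam^T *m u) (negpart lhat) + dot u (pospart lhat) <=
      \sum_j (- l j 0 * Num.max (- lhat j 0) 0 + u j 0 * Num.max (lhat j 0) 0).
    rewrite !dotE -big_split /=; apply: ler_sum => j _.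
    have := hl j; rewrite [X in _ <= X]mxE.
    generalize ((Lam^T *m u) j 0) => a hlj.
    rewrite !mxE; apply: lerD => //; apply: ler_wpM2r; [exact: maxge0 | move: hlj; rewrite !mxE => hlj; lra].
  have sb2 : \sum_j (- l j 0 * Num.max (- lhat j 0) 0 + u j 0 * Num.max (lhat j 0) 0) <=
      \sum_j (2^-1 * (u j 0 + l j 0) * lhat j 0 + 2^-1 * ((g * d j 0) *
          (2^-1 * (u j 0 - l j 0)) ^+ 2 + lhat j 0 ^+ 2 / (g * d j 0))).
    by apply: ler_sum => j _; apply: pw_main; rewrite mulr_gt0.
  have sb3 : \sum_j (2^-1 * (u j 0 + l j 0) * lhat j 0 + 2^-1 * ((g * d j 0) *
          (2^-1 * (u j 0 - l j 0)) ^+ 2 + lhat j 0 ^+ 2 / (g * d j 0))) =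
      dot r lhat + 2^-1 * g * dot v (Dmat d *m v) + 2^-1 * g * dot t (Dmat d *m t)
      - dot t (Dmat d *m c) + 2^-1 * g^-1 * dot c (Dmat d *m c).
    rewrite dotE !dotDmat !mulr_sumr -big_split -big_split -sumrB -big_split /=.
    apply: eq_bigr => j _.
    have hj : lhat j 0 = g * (d j 0 * t j 0) - d j 0 * c j 0.
      by rewrite elhat hc -!Dmat_mulE; move: (Dmat d *m t) (Dmat d *m c) => X Y; rewrite !mxE.
    rewrite hj er ev !mxE.
    have g0 : g != 0 by rewrite gt_eqF.
    have d0 : d j 0 != 0 by rewrite gt_eqF.
    have gd : g * d j 0 != 0 by rewrite mulf_neq0.
    field; exact/andP.
  rewrite ub.
  have hT := ef; rewrite -hbeta -hg2 in sb3.
  move: sb1 sb2 sb3; rewrite drh dtc.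
  have -> : 2^-1 * g^-1 * g ^+ 2 = 2^-1 * g.
    have g0 : g != 0 by rewrite gt_eqF.
    by field.
  have gef : g * dot v (Dmat d *m v) - g * dot t (Dmat d *m t) = g.
    by rewrite -mulrBr ef mulr1.
  move=> sb1 sb2 sb3; lra.
exfalso.
rewrite ger0_norm // in hg.
have [[x [_ hx]] _] := hz.
have [s es] : exists s, s = A^T *m x by eexists.
rewrite -es in hx.
set S := \sum_j d j 0.
have S0 : 0 < S.
  rewrite /S (bigD1 i) //=.
  have : 0 <= \sum_(j | j != i) d j 0 by apply: sumr_ge0 => j _; exact: ltW.
  have := hd i; lra.
have hcs : forall j, 1 <= \sum_k Lam k j.
  move=> j.
  have hcol : A *m col j Lam = - col j A by rewrite !colE mulmxA hAL mulNmx.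
  have e1 : dot (col j A) (col j A) = 1.
    by rewrite dotE -(huc j); apply: eq_bigr => k _; rewrite !mxE expr2.
  have e2 : dot (col j Lam) (A^T *m col j A) = - 1.
    by rewrite -dot_mul hcol dotNl e1.
  rewrite dotE in e2.
  have : \sum_k - (col j Lam k 0 * (A^T *m col j A) k 0) <= \sum_k Lam k j.
    apply: ler_sum => k _.
    have := gram_bound huc j k; rewrite ler_norml => /andP [g1 g2].
    have := hL k j; rewrite mxE; nra.
  by rewrite sumrN e2 opprK.
have LTs : Lam^T *m s = - s.
  by rewrite es mulmxA -trmx_mul hAL linearN /= mulNmx.
have hlb : forall j, l j 0 <= s j 0 - zstar.
  move=> j.
  have key : zstar * \sum_k Lam k j <= (Lam^T *m u) j 0 - (Lam^T *m s) j 0.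
    rewrite !mxE -sumrB mulr_sumr; apply: ler_sum => k _.
    rewrite !mxE; have := hx k; have := hL k j; nra.
  have LTsj : (Lam^T *m s) j 0 = - s j 0 by rewrite LTs mxE.
  have := hl j; rewrite [X in _ <= X]mxE.
  have := hcs j; nra.
have Ts : dot t (Dmat d *m t) <= dot (s - r) (Dmat d *m (s - r)).
  have esr : s - r = t + A^T *m (x - y).
    by rewrite es et mulmxBr [RHS]addrC addrA subrK.
  have [e ee] : exists e, e = A^T *m (x - y) by eexists.
  rewrite esr -ee.
  have ed : dot e (Dmat d *m t) = 0 by rewrite ee dot_mul trmxK ADt dot0r.
  rewrite mulmxDr !(dotDl, dotDr) (dotD_sym d t e) ed.
  have := dot_ge0 e (fun j => ltW (hd j)); lra.
have hv : zstar ^+ 2 * S <= dot v (Dmat d *m v) - dot (s - r) (Dmat d *m (s - r)).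
  rewrite !dotDmat -sumrB /S mulr_sumr; apply: ler_sum => j _.
  rewrite -mulrBr mulrC.
  apply: ler_wpM2l; first exact: ltW.
  rewrite ev er !mxE.
  have -> : 2^-1 * (u j 0 - l j 0) * (2^-1 * (u j 0 - l j 0)) -
    (s j 0 - 2^-1 * (u j 0 + l j 0)) * (s j 0 - 2^-1 * (u j 0 + l j 0)) =
    (u j 0 - s j 0) * (s j 0 - l j 0) by field.
  have := hx j; have := hlb j; nra.
have hbS : 1 <= beta * S.
  have pw : 2 * beta * dot (A^T *m ai) (Dmat d *m c) <= dot c (Dmat d *m c) + beta ^+ 2 * S.
    rewrite !dotDmat /S !mulr_sumr -big_split /=; apply: ler_sum => j _.
    have := gram_bound huc i j; rewrite -eai ler_norml => /andP [g1 g2].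
    set G := (A^T *m ai) j 0 in g1 g2 *.
    set cj := c j 0.
    have q1 : 0 <= (cj - beta * G) ^+ 2 := sqr_ge0 _.
    have q2 : G ^+ 2 <= 1 by nra.
    have q3 : beta ^+ 2 * G ^+ 2 <= beta ^+ 2 by have := sqr_ge0 beta; nra.
    have p1 : 2 * beta * (G * cj) <= cj * cj + beta ^+ 2 by nra.
    have e1 : 2 * beta * (d j 0 * (G * cj)) = d j 0 * (2 * beta * (G * cj)) by ring.
    have e2 : d j 0 * (cj * cj) + beta ^+ 2 * d j 0 = d j 0 * (cj * cj + beta ^+ 2) by ring.
    rewrite e1 e2; apply: ler_wpM2l => //; exact: ltW.
  rewrite hone -hbeta in pw; nra.
have h1 : zstar ^+ 2 * S <= 1 by lra.
have h2 : g ^+ 2 < zstar ^+ 2 by nra.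
have h3 : g ^+ 2 * S < zstar ^+ 2 * S by rewrite ltr_pM2r.
rewrite hg2 in h3.
by move: (lt_le_trans h3 (le_trans h1 hbS)); rewrite ltxx.
Qed.
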